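(* Let $\alpha=m+n\gamma^{-1}\in\mathbb{Z}[\gamma]$ ($m,n\in\mathbb{Z}$) with $\alpha>0$, and let $Q_\alpha$ be the set of quads representing $\alpha$. Then $Q_\alpha$ is infinite and its elements have pairwise distinct sizes. Listing its elements in order of increasing size, the sizes form a sequence of consecutive integers, while the degrees, the bi-degrees (for the componentwise partial order on $\mathbb{N}^2$) and the second partial degrees are strictly increasing. The element of $Q_\alpha$ of smallest size has degree $|m|+|n|$ and bi-degree $(|m|,|n|)$.
   Context: Let $f\colon\mathbb{Z}\to\mathbb{Z}$ be defined by $f(0)=f(1)=1$, $f(i+2)=f(i+1)+f(i)$ for all $i\in\mathbb{Z}$; $\gamma=(1+\sqrt5)/2$; $\mathbb{Z}[\gamma]=\mathbb{Z}\oplus\mathbb{Z}\gamma^{-1}$. A quad is a tuple $q=(i;a,b,c)$ of non-negative integers with $a\ge1$. It represents $\alpha\in\mathbb{Z}[\gamma]$ if $\alpha=a\gamma^{-i}+b\gamma^{-i-1}+c\gamma^{-i-2}$. Its first and second partial degrees are $d_1(q)=af(i-2)+bf(i-1)+cf(i)$ and $d_2(q)=af(i-1)+bf(i)+cf(i+1)$, its degree is $d(q)=d_1(q)+d_2(q)$, its bi-degree is $(d_1(q),d_2(q))$, and its size is $a+b+c$. *)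

(* Defs.v *)
From Stdlib Require Import Reals ZArith Lia Lra.
Open Scope R_scope.

Definition gamma : R := (1 + sqrt 5) / 2.

Record quad : Type := Quad { qi : nat; qa : nat; qb : nat; qc : nat }.

Definition is_quad (q : quad) : Prop := (1 <= qa q)%nat.

Definition represents (q : quad) (alpha : R) : Prop :=
  alpha = INR (qa q) * (/ gamma) ^ (qi q)
        + INR (qb q) * (/ gamma) ^ (qi q + 1)
        + INR (qc q) * (/ gamma) ^ (qi q + 2).

Definition Q (alpha : R) (q : quad) : Prop := is_quad q /\ represents q alpha.

Definition pdeg1 (f : Z -> Z) (q : quad) : Z :=
  (Z.of_nat (qa q) * f (Z.of_nat (qi q) - 2)
   + Z.of_nat (qb q) * f (Z.of_nat (qi q) - 1)
   + Z.of_nat (qc q) * f (Z.of_nat (qi q)))%Z.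

Definition pdeg2 (f : Z -> Z) (q : quad) : Z :=
  (Z.of_nat (qa q) * f (Z.of_nat (qi q) - 1)
   + Z.of_nat (qb q) * f (Z.of_nat (qi q))
   + Z.of_nat (qc q) * f (Z.of_nat (qi q) + 1))%Z.

Definition qdeg (f : Z -> Z) (q : quad) : Z := (pdeg1 f q + pdeg2 f q)%Z.

Definition qsize (q : quad) : nat := (qa q + qb q + qc q)%nat.

Definition bideg_lt (f : Z -> Z) (q q' : quad) : Prop :=
  (pdeg1 f q <= pdeg1 f q')%Z /\ (pdeg2 f q <= pdeg2 f q')%Z /\
  (pdeg1 f q, pdeg2 f q) <> (pdeg1 f q', pdeg2 f q').

(* Main.v *)
Require Import Defs.
From Stdlib Require Import Reals ZArith Lia Lra Psatz.
Open Scope R_scope.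

Definition phi : R := / gamma.

Lemma gamma_pos : 0 < gamma.
Proof. unfold gamma. assert (0 <= sqrt 5) by apply sqrt_pos. lra. Qed.

Lemma gamma_sq : gamma * gamma = gamma + 1.
Proof. unfold gamma. assert (H := sqrt_sqrt 5 ltac:(lra)). nra. Qed.

Lemma phi_pos : 0 < phi.
Proof. unfold phi; apply Rinv_0_lt_compat, gamma_pos. Qed.

Lemma phi_sq : phi * phi = 1 - phi.
Proof.
  unfold phi. assert (Hg := gamma_pos). assert (H := gamma_sq).
  assert (Hn : gamma <> 0) by lra. revert Hg H Hn. generalize gamma. intros g Hg H Hn.
  replace (1 - /g) with ((g*g - g)/(g*g)) by (field; exact Hn).
  rewrite H at 1. field. exact Hn.
Qed.
Lemma phi_lt1 : phi < 1.
Proof. assert (H := phi_sq); assert (H' := phi_pos); nra. Qed.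

Lemma descent : forall N x y, (Z.abs x + Z.abs y <= Z.of_nat N)%Z ->
  (x*x - x*y - y*y = 0)%Z -> x = 0%Z /\ y = 0%Z.
Proof.
  induction N; intros x y Hb He.
  - simpl in Hb; lia.
  - destruct (Z.Even_or_Odd x) as [[k Hk]|[k Hk]];
    destruct (Z.Even_or_Odd y) as [[l Hl]|[l Hl]]; subst.
    + assert (k*k - k*l - l*l = 0)%Z by nia.
      destruct (IHN k l); [lia|assumption|lia].
    + exfalso. nia.
    + exfalso. nia.
    + exfalso. nia.
Qed.

Lemma irr : forall x y : Z, IZR x + IZR y * phi = 0 -> x = 0%Z /\ y = 0%Z.
Proof.
  intros x y H.
  assert (E: IZR x = - IZR y * phi) by lra.
  assert (E2 : IZR (x*x - x*y - y*y) = 0).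
  { rewrite !minus_IZR, !mult_IZR, E.
    replace (- IZR y * phi * (- IZR y * phi) - - IZR y * phi * IZR y - IZR y * IZR y)
      with (IZR y * IZR y * (phi*phi + phi - 1)) by ring.
    rewrite phi_sq; ring. }
  apply eq_IZR in E2.
  apply (descent (Z.to_nat (Z.abs x + Z.abs y))); [lia|exact E2].
Qed.

Lemma coord_uniq : forall x y x' y' : Z,
  IZR x + IZR y * phi = IZR x' + IZR y' * phi -> x = x' /\ y = y'.
Proof.
  intros. destruct (irr (x - x') (y - y')).
  rewrite !minus_IZR; lra. lia.
Qed.
Definition mulphi (p : Z * Z) : Z * Z := (snd p, (fst p - snd p)%Z).

Definition coord (q : quad) : Z * Z :=
  Nat.iter (qi q) mulphi (Z.of_nat (qa q + qc q), (Z.of_nat (qb q) - Z.of_nat (qc q))%Z).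

Lemma pow_coord : forall i u v,
  phi ^ i * (IZR u + IZR v * phi) =
  IZR (fst (Nat.iter i mulphi (u, v))) + IZR (snd (Nat.iter i mulphi (u, v))) * phi.
Proof.
  induction i; intros u v.
  - simpl. ring.
  - simpl Nat.iter. destruct (Nat.iter i mulphi (u, v)) as [x y] eqn:E.
    simpl. rewrite Rmult_assoc, IHi, E. simpl. rewrite minus_IZR.
    transitivity (IZR y * (phi*phi) + IZR x * phi). ring.
    rewrite phi_sq. ring.
Qed.

Lemma quad_value : forall q,
  INR (qa q) * (/ gamma) ^ (qi q) + INR (qb q) * (/ gamma) ^ (qi q + 1)
  + INR (qc q) * (/ gamma) ^ (qi q + 2)
  = IZR (fst (coord q)) + IZR (snd (coord q)) * phi.
Proof.
  intros [i a b c]. unfold coord; simpl. fold phi. rewrite <- pow_coord.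
  rewrite Nat2Z.inj_add, plus_IZR, minus_IZR, <- !INR_IZR_INZ.
  rewrite !pow_add. simpl.
  transitivity (phi^i * (INR a + INR b * phi + INR c * (phi*phi))). ring.
  rewrite phi_sq. ring.
Qed.

Lemma Q_iff : forall m n q, Q (IZR m + IZR n * / gamma) q <-> (1 <= qa q)%nat /\ coord q = (m, n).
Proof.
  intros m n q. unfold Q, is_quad, represents. rewrite quad_value. fold phi.
  split; intros [H1 H2]; split; auto.
  - destruct (coord q) as [x y]. simpl in H2. destruct (coord_uniq _ _ _ _ H2). subst; auto.
  - rewrite H2. reflexivity.
Qed.

Definition succ (q : quad) : quad :=
  match q with
  | Quad i a b c =>
    match a with
    | 1%nat => Quad (S i) (S b) (S c) 0
    | _ => Quad i (a - 1) (S b) (S c)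
    end
  end.

Lemma coord_succ : forall q, (1 <= qa q)%nat -> coord (succ q) = coord q.
Proof.
  intros [i a b c] Ha. simpl in Ha. unfold coord.
  destruct a as [|[|a]]; [lia| |].
  - cbn [succ qi qa qb qc]. rewrite Nat.iter_succ_r. f_equal. unfold mulphi. cbn [fst snd]. f_equal; lia.
  - cbn [succ qi qa qb qc]. f_equal. f_equal; lia.
Qed.

Lemma succ_a : forall q, (1 <= qa q)%nat -> (1 <= qa (succ q))%nat.
Proof. intros [i a b c] Ha. simpl in *. destruct a as [|[|a]]; simpl; lia. Qed.

Lemma succ_size : forall q, (1 <= qa q)%nat -> qsize (succ q) = S (qsize q).
Proof. intros [i a b c] Ha. unfold qsize; simpl in *. destruct a as [|[|a]]; simpl; lia. Qed.

Definition minimal (q : quad) : Prop := qb q = 0%nat \/ (qc q = 0%nat /\ qi q = 0%nat).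

Lemma reduce : forall N q, (qsize q <= N)%nat -> (1 <= qa q)%nat ->
  exists q0 k, (1 <= qa q0)%nat /\ minimal q0 /\ Nat.iter k succ q0 = q.
Proof.
  induction N; intros [i a b c] Hs Ha; unfold qsize in Hs; simpl in *.
  - lia.
  - destruct b as [|b].
    + exists (Quad i a 0 c), 0%nat. simpl. unfold minimal; simpl; auto.
    + destruct c as [|c].
      * destruct i as [|i].
        -- exists (Quad 0 a (S b) 0), 0%nat. simpl. unfold minimal; simpl; auto.
        -- destruct a as [|a]; [lia|].
           destruct (IHN (Quad i 1 a b)) as [q0 [k [H1 [H2 H3]]]]; unfold qsize; simpl; try lia.
           exists q0, (S k). split; auto. split; auto. simpl. rewrite H3. reflexivity.
      * destruct (IHN (Quad i (S a) b c)) as [q0 [k [H1 [H2 H3]]]]; unfold qsize; simpl; try lia.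
        exists q0, (S k). split; auto. split; auto. simpl. rewrite H3. simpl.
        destruct a; [lia|]. simpl. f_equal; lia.
Qed.

Definition Pinv (p : Z * Z) : Prop :=
  let (x, y) := p in
  ((x <= 0)%Z /\ (1 <= y)%Z /\ (1 <= x + y)%Z) \/ ((1 <= x)%Z /\ (y <= -1)%Z /\ (x + y <= 0)%Z).

Lemma inv1 : forall j a c, (1 <= a)%nat -> Pinv (coord (Quad (S j) a 0 c)).
Proof.
  induction j; intros a c Ha.
  - unfold coord, Pinv, mulphi; cbn [qi qa qb qc Nat.iter fst snd]. simpl. lia.
  - specialize (IHj a c Ha). unfold coord in *. cbn [qi qa qb qc] in *.
    change (Nat.iter (S (S j)) mulphi ?v) with (mulphi (Nat.iter (S j) mulphi v)).
    destruct (Nat.iter (S j) mulphi _) as [x y]. unfold Pinv, mulphi in *; cbn [fst snd]. lia.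
Qed.

Lemma min_unique : forall i q q', qi q = i -> minimal q -> minimal q' ->
  (1 <= qa q)%nat -> (1 <= qa q')%nat -> coord q = coord q' -> q = q'.
Proof.
  induction i; intros [i0 a b c] [i' a' b' c'] Hi Hm Hm' Ha Ha' Hc;
    unfold minimal in *; cbn [qi qa qb qc] in *; subst i0.
  - destruct i' as [|j'].
    + unfold coord in Hc; cbn [qi qa qb qc Nat.iter] in Hc. injection Hc; intros.
      f_equal; lia.
    + exfalso. destruct Hm' as [Hb'|[_ Hi']]; [|discriminate]. subst b'.
      assert (HP := inv1 j' a' c' Ha'). rewrite <- Hc in HP.
      unfold coord, Pinv in HP; cbn [qi qa qb qc Nat.iter] in HP; simpl in HP. lia.
  - destruct i' as [|j'].
    + exfalso. destruct Hm as [Hb|[_ Hi]]; [|discriminate]. subst b.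
      assert (HP := inv1 i a c Ha). rewrite Hc in HP.
      unfold coord, Pinv in HP; cbn [qi qa qb qc Nat.iter] in HP; simpl in HP. lia.
    + destruct Hm as [Hb|[_ Hi]]; [|discriminate].
      destruct Hm' as [Hb'|[_ Hi']]; [|discriminate]. subst b b'.
      assert (E : Quad i a 0 c = Quad j' a' 0 c').
      { apply (IHi (Quad i a 0 c) (Quad j' a' 0 c'));
          [reflexivity|left; reflexivity|left; reflexivity|exact Ha|exact Ha'|].
        unfold coord in *; cbn [qi qa qb qc] in *.
        change (Nat.iter (S ?k) mulphi ?v) with (mulphi (Nat.iter k mulphi v)) in Hc.
        destruct (Nat.iter i mulphi _) as [x y]; destruct (Nat.iter j' mulphi _) as [x' y'].
        unfold mulphi in Hc; cbn [fst snd] in Hc. injection Hc; intros. f_equal; lia. }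
      injection E; intros; subst; reflexivity.
Qed.

Lemma base_ex : forall m n : Z, (0 <= m)%Z -> (0 <= n)%Z -> (0 < m \/ 0 < n)%Z ->
  exists q, (1 <= qa q)%nat /\ coord q = (m, n).
Proof.
  intros m n Hm Hn H.
  destruct (Z.eq_dec m 0) as [E|E].
  - subst. exists (Quad 1 (Z.to_nat n) 0 0). split; [cbn; lia|].
    unfold coord, mulphi; cbn [qi qa qb qc Nat.iter fst snd]. simpl. f_equal; lia.
  - exists (Quad 0 (Z.to_nat m) (Z.to_nat n) 0). split; [cbn; lia|].
    unfold coord; cbn [qi qa qb qc Nat.iter]. simpl. f_equal; lia.
Qed.

Lemma pos_shift : forall m n : Z, 0 < IZR m + IZR n * phi ->
  0 < IZR (m + n) + IZR m * phi.
Proof.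
  intros m n H. assert (Hp := phi_pos). assert (Hs := phi_sq).
  assert (E : phi * (IZR (m + n) + IZR m * phi) = IZR m + IZR n * phi).
  { rewrite plus_IZR. transitivity ((IZR m + IZR n) * phi + IZR m * (phi * phi)). ring.
    rewrite Hs. ring. }
  rewrite <- E in H. nra.
Qed.

Lemma exist_q : forall N m n, (Z.abs m + Z.abs n <= Z.of_nat N)%Z ->
  0 < IZR m + IZR n * phi -> exists q, (1 <= qa q)%nat /\ coord q = (m, n).
Proof.
  assert (Hp := phi_pos). assert (Hl := phi_lt1).
  induction N; intros m n Hb H.
  - assert (m = 0%Z) by lia. assert (n = 0%Z) by lia. subst. simpl in H. lra.
  - assert (Hshift : (exists q, (1 <= qa q)%nat /\ coord q = ((m + n)%Z, m)) ->
       exists q, (1 <= qa q)%nat /\ coord q = (m, n)).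
    { intros [[i a b c] [H1 H2]]. exists (Quad (S i) a b c). split; [exact H1|].
      change (coord (Quad (S i) a b c)) with (mulphi (coord (Quad i a b c))).
      rewrite H2. unfold mulphi; cbn. f_equal; lia. }
    destruct (Z_le_gt_dec 0 m) as [Hm|Hm]; destruct (Z_le_gt_dec 0 n) as [Hn|Hn].
    + apply base_ex; try lia.
      destruct (Z.eq_dec m 0); destruct (Z.eq_dec n 0); try lia. subst. simpl in H. lra.
    + apply Hshift. destruct (Z_le_gt_dec 0 (m + n)).
      * apply base_ex; lia.
      * destruct (Z.eq_dec m 0) as [E|E].
        { exfalso. subst. assert (IZR n < 0) by (apply IZR_lt; lia). simpl in H. nra. }
        apply IHN; [lia|]. apply pos_shift; exact H.
    + apply Hshift. assert (Hmn : (0 < m + n)%Z).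
      { apply lt_IZR. rewrite plus_IZR. assert (IZR 0 <= IZR n) by (apply IZR_le; lia).
        simpl in *. nra. }
      apply IHN; [lia|]. apply pos_shift; exact H.
    + exfalso. assert (IZR m < 0) by (apply IZR_lt; lia).
      assert (IZR n < 0) by (apply IZR_lt; lia). nra.
Qed.

Open Scope Z_scope.

Definition fib (f : Z -> Z) : Prop :=
  f 0 = 1 /\ f 1 = 1 /\ forall i, f (i + 2) = f (i + 1) + f i.

Lemma f_rec : forall f, fib f -> forall k, f k = f (k - 1) + f (k - 2).
Proof.
  intros f [_ [_ H]] k. specialize (H (k - 2)).
  replace (k - 2 + 2) with k in H by lia. replace (k - 2 + 1) with (k - 1) in H by lia. exact H.
Qed.

Lemma f_m1 : forall f, fib f -> f (-1) = 0.
Proof. intros f Hf. assert (H := f_rec f Hf 1). destruct Hf as [H0 [H1 _]]. simpl in H. lia. Qed.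

Lemma f_m2 : forall f, fib f -> f (-2) = 1.
Proof. intros f Hf. assert (H := f_rec f Hf 0). assert (H' := f_m1 f Hf).
  destruct Hf as [H0 [H1 _]]. simpl in H. lia. Qed.

Lemma f_nonneg_nat : forall f, fib f -> forall n : nat,
  0 <= f (Z.of_nat n - 2) /\ 0 <= f (Z.of_nat n - 1).
Proof.
  intros f Hf. induction n as [|n [IH1 IH2]].
  - simpl. rewrite (f_m1 f Hf), (f_m2 f Hf). lia.
  - rewrite Nat2Z.inj_succ. replace (Z.succ (Z.of_nat n) - 2) with (Z.of_nat n - 1) by lia.
    split; [exact IH2|]. rewrite (f_rec f Hf).
    replace (Z.succ (Z.of_nat n) - 1 - 1) with (Z.of_nat n - 1) by lia.
    replace (Z.succ (Z.of_nat n) - 1 - 2) with (Z.of_nat n - 2) by lia. lia.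
Qed.

Lemma f_nonneg : forall f, fib f -> forall k, -2 <= k -> 0 <= f k.
Proof.
  intros f Hf k Hk. destruct (f_nonneg_nat f Hf (Z.to_nat (k + 2))) as [H _].
  replace (Z.of_nat (Z.to_nat (k + 2)) - 2) with k in H by lia. exact H.
Qed.

Lemma f_pos_nat : forall f, fib f -> forall n : nat,
  1 <= f (Z.of_nat n) /\ 1 <= f (Z.of_nat n + 1).
Proof.
  intros f Hf. induction n as [|n [IH1 IH2]].
  - destruct Hf as [H0 [H1 _]]. simpl. lia.
  - rewrite Nat2Z.inj_succ. replace (Z.succ (Z.of_nat n)) with (Z.of_nat n + 1) by lia.
    split; [exact IH2|]. rewrite (f_rec f Hf).
    replace (Z.of_nat n + 1 + 1 - 1) with (Z.of_nat n + 1) by lia.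
    replace (Z.of_nat n + 1 + 1 - 2) with (Z.of_nat n) by lia. lia.
Qed.

Lemma f_pos : forall f, fib f -> forall k, 0 <= k -> 1 <= f k.
Proof.
  intros f Hf k Hk. destruct (f_pos_nat f Hf (Z.to_nat k)) as [H _].
  replace (Z.of_nat (Z.to_nat k)) with k in H by lia. exact H.
Qed.

Lemma deg_succ : forall f, fib f -> forall q, (1 <= qa q)%nat ->
  pdeg1 f q <= pdeg1 f (succ q) /\ pdeg2 f q < pdeg2 f (succ q).
Proof.
  intros f Hf [i a b c] Ha. cbn [qa] in Ha.
  set (I := Z.of_nat i).
  assert (R0 := f_rec f Hf I). assert (R1 := f_rec f Hf (I + 1)). assert (R2 := f_rec f Hf (I + 2)).
  replace (I + 1 - 1) with I in R1 by lia. replace (I + 1 - 2) with (I - 1) in R1 by lia.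
  replace (I + 2 - 1) with (I + 1) in R2 by lia. replace (I + 2 - 2) with I in R2 by lia.
  assert (N2 := f_nonneg f Hf (I - 2) ltac:(lia)).
  assert (N1 := f_nonneg f Hf (I - 1) ltac:(lia)).
  assert (P0 := f_pos f Hf I ltac:(lia)).
  assert (P1 := f_pos f Hf (I + 1) ltac:(lia)).
  destruct a as [|[|a]]; [lia| |].
  - unfold pdeg1, pdeg2; cbn [succ qi qa qb qc]. rewrite (Nat2Z.inj_succ i). fold I.
    replace (Z.succ I - 2) with (I - 1) by lia. replace (Z.succ I - 1) with I by lia.
    replace (Z.succ I) with (I + 1) by lia.
    rewrite !Nat2Z.inj_succ. simpl Z.of_nat. nia.
  - unfold pdeg1, pdeg2; cbn [succ qi qa qb qc]. fold I.
    replace (S (S a) - 1)%nat with (S a) by lia.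
    rewrite !Nat2Z.inj_succ. nia.
Qed.

Lemma type1_coord : forall f, fib f -> forall i a c,
  let q := Quad i a 0 c in
  coord q = (pdeg1 f q, - pdeg2 f q) \/ coord q = (- pdeg1 f q, pdeg2 f q).
Proof.
  intros f Hf. induction i as [|i IH]; intros a c q; subst q.
  - left. unfold coord, pdeg1, pdeg2; cbn [qi qa qb qc Nat.iter]. simpl Z.of_nat.
    change (0 - 2) with (-2). change (0-1) with (-1). change (0+1) with 1. rewrite (f_m1 f Hf), (f_m2 f Hf). simpl Nat.iter. destruct Hf as [H0 [H1 _]]. rewrite H0, H1.
    f_equal; lia.
  - specialize (IH a c). cbv zeta in IH.
    change (coord (Quad (S i) a 0 c)) with (mulphi (coord (Quad i a 0 c))).
    set (I := Z.of_nat i).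
    assert (R0 := f_rec f Hf I). assert (R1 := f_rec f Hf (I + 1)). assert (R2 := f_rec f Hf (I + 2)).
    replace (I + 1 - 1) with I in R1 by lia. replace (I + 1 - 2) with (I - 1) in R1 by lia.
    replace (I + 2 - 1) with (I + 1) in R2 by lia. replace (I + 2 - 2) with I in R2 by lia.
    unfold pdeg1, pdeg2 in *; cbn [qi qa qb qc] in *. rewrite (Nat2Z.inj_succ i). fold I in IH |- *.
    replace (Z.succ I - 2) with (I - 1) by lia. replace (Z.succ I - 1) with I by lia.
    replace (Z.succ I) with (I + 1) by lia. replace (I + 1 + 1) with (I + 2) by lia.
    destruct IH as [E|E]; rewrite E; unfold mulphi; cbn [fst snd]; [right|left]; f_equal; rewrite ?R2, ?R0; ring.
Qed.

Lemma min_deg : forall f, fib f -> forall q m n, minimal q -> (1 <= qa q)%nat ->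
  coord q = (m, n) -> pdeg1 f q = Z.abs m /\ pdeg2 f q = Z.abs n.
Proof.
  intros f Hf [i a b c] m n Hm Ha Hc. unfold minimal in Hm; cbn [qi qa qb qc] in *.
  destruct Hm as [Hb|[Hc0 Hi]].
  - subst b. set (I := Z.of_nat i).
    assert (N2 := f_nonneg f Hf (I - 2) ltac:(lia)).
    assert (N1 := f_nonneg f Hf (I - 1) ltac:(lia)).
    assert (N0 := f_nonneg f Hf I ltac:(lia)).
    assert (N3 := f_nonneg f Hf (I + 1) ltac:(lia)).
    assert (D1 : 0 <= pdeg1 f (Quad i a 0 c)) by (unfold pdeg1; cbn [qi qa qb qc]; fold I; nia).
    assert (D2 : 0 <= pdeg2 f (Quad i a 0 c)) by (unfold pdeg2; cbn [qi qa qb qc]; fold I; nia).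
    destruct (type1_coord f Hf i a c) as [E|E]; rewrite Hc in E; injection E; intros; lia.
  - subst c i. unfold coord in Hc; cbn [qi qa qb qc Nat.iter] in Hc. injection Hc; intros.
    unfold pdeg1, pdeg2; cbn [qi qa qb qc]. change (Z.of_nat 0 - 2) with (-2).
    change (Z.of_nat 0 - 1) with (-1). change (Z.of_nat 0 + 1) with 1. change (Z.of_nat 0) with 0.
    rewrite (f_m1 f Hf), (f_m2 f Hf). destruct Hf as [Hz [Ho _]]. rewrite Hz, Ho. lia.
Qed.

Lemma iter_props : forall k q, (1 <= qa q)%nat ->
  (1 <= qa (Nat.iter k succ q))%nat /\ coord (Nat.iter k succ q) = coord q /\
  qsize (Nat.iter k succ q) = (qsize q + k)%nat.
Proof.
  induction k; intros q Ha.
  - simpl. split; [exact Ha|]. split; [reflexivity|lia].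
  - destruct (IHk q Ha) as [H1 [H2 H3]]. simpl Nat.iter.
    split; [apply succ_a; exact H1|]. rewrite coord_succ by exact H1. split; [exact H2|].
    rewrite succ_size by exact H1. lia.
Qed.

Close Scope Z_scope.

Theorem mainTheorem16
  (f : Z -> Z)
  (hf0 : f 0%Z = 1%Z) (hf1 : f 1%Z = 1%Z)
  (hfrec : forall i : Z, f (i + 2)%Z = (f (i + 1) + f i)%Z)
  (m n : Z)
  (halpha : 0 < IZR m + IZR n * / gamma) :
  let alpha := IZR m + IZR n * / gamma in
  (forall q q' : quad, Q alpha q -> Q alpha q' -> qsize q = qsize q' -> q = q') /\
  exists s : nat -> quad,
    (forall k, Q alpha (s k)) /\
    (forall q, Q alpha q -> exists k, s k = q) /\
    (forall k l, s k = s l -> k = l) /\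
    (forall k, qsize (s (S k)) = S (qsize (s k))) /\
    (forall k, (qdeg f (s k) < qdeg f (s (S k)))%Z) /\
    (forall k, bideg_lt f (s k) (s (S k))) /\
    (forall k, (pdeg2 f (s k) < pdeg2 f (s (S k)))%Z) /\
    qdeg f (s 0%nat) = (Z.abs m + Z.abs n)%Z /\
    pdeg1 f (s 0%nat) = Z.abs m /\ pdeg2 f (s 0%nat) = Z.abs n.
Proof.
  intros alpha.
  assert (Hf : fib f) by (split; [|split]; assumption).
  destruct (exist_q (Z.to_nat (Z.abs m + Z.abs n)) m n ltac:(lia) halpha) as [q1 [Hq1a Hq1c]].
  destruct (reduce (qsize q1) q1 (le_n _) Hq1a) as [q0 [k1 [H0a [H0m H0e]]]].
  assert (H0c : coord q0 = (m, n)).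
  { destruct (iter_props k1 q0 H0a) as [_ [E _]]. rewrite <- E, H0e. exact Hq1c. }
  set (s := fun k => Nat.iter k succ q0).
  assert (HsQ : forall k, Q alpha (s k)).
  { intro k. unfold alpha. apply Q_iff. destruct (iter_props k q0 H0a) as [A [B _]].
    split; [exact A|]. unfold s. rewrite B. exact H0c. }
  assert (Hcover : forall q, Q alpha q -> exists k, s k = q).
  { intros q Hq. unfold alpha in Hq. apply Q_iff in Hq. destruct Hq as [Ha Hc].
    destruct (reduce (qsize q) q (le_n _) Ha) as [q0' [k [H1 [H2 H3]]]].
    exists k. unfold s. rewrite <- H3. f_equal.
    apply (min_unique (qi q0) q0 q0' eq_refl H0m H2 H0a H1).
    rewrite H0c. destruct (iter_props k q0' H1) as [_ [E _]]. rewrite <- E, H3. rewrite Hc. reflexivity. }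
  assert (Hsize : forall k, qsize (s k) = (qsize q0 + k)%nat).
  { intro k. destruct (iter_props k q0 H0a) as [_ [_ E]]. exact E. }
  assert (Hinj : forall k l, s k = s l -> k = l).
  { intros k l E. assert (E' := f_equal qsize E). rewrite !Hsize in E'. lia. }
  assert (Hdeg : forall k, (pdeg1 f (s k) <= pdeg1 f (s (S k)))%Z /\ (pdeg2 f (s k) < pdeg2 f (s (S k)))%Z).
  { intro k. destruct (iter_props k q0 H0a) as [A _]. apply (deg_succ f Hf _ A). }
  destruct (min_deg f Hf q0 m n H0m H0a H0c) as [D1 D2].
  split.
  { intros q q' Hq Hq' Hs. destruct (Hcover q Hq) as [k Hk]. destruct (Hcover q' Hq') as [l Hl].
    subst q q'. rewrite !Hsize in Hs. assert (k = l) by lia. subst; reflexivity. }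
  exists s. split; [exact HsQ|]. split; [exact Hcover|]. split; [exact Hinj|].
  split. { intro k. rewrite !Hsize. lia. }
  split. { intro k. destruct (Hdeg k). unfold qdeg. lia. }
  split. { intro k. destruct (Hdeg k). unfold bideg_lt. split; [lia|]. split; [lia|].
           intro E. apply (f_equal snd) in E. cbn [snd] in E. lia. }
  split. { intro k. destruct (Hdeg k). assumption. }
  simpl s. unfold qdeg. rewrite D1, D2. repeat split; reflexivity.
Qed.
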